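(* Let $p$ be a prime with $p\equiv 1\pmod 6$. Then there exist an integer $k$ with $2\le k\le p-1$ and an orthogonal trade $T$ in $B_p$ of index $(1,k)$ such that $|T|$ is not divisible by $p$. More precisely, for any integer $k$ with $2\le k\le (p+1)/2$ and $k^2-k+1\equiv 0\pmod p$ (such $k$ exists), there is an orthogonal trade of index $(1,k)$ in $B_p$ of size $3k(k-1)$.
   Context: All arithmetic is modulo $p$. A Latin square of order $p$ is viewed as a set of (row, column, symbol) triples in $\mathbb{Z}_p^3$. For $1\le k\le p-1$, $B_p(k)$ is the Latin square with symbol $ki+j$ in cell $(i,j)$, $i,j\in\mathbb{Z}_p$; $B_p=B_p(1)$. A Latin trade in a Latin square $L$ is a subset $T\subseteq L$ for which there is a partial Latin square $T'$ (a disjoint mate) such that $T$ and $T'$ occupy the same set of cells, $T\cap T'=\emptyset$, and each row (respectively column) of $T$ contains the same set of symbols as the corresponding row (column) of $T'$. Two Latin squares of order $p$ are orthogonal if superimposing them yields each of the $p^2$ ordered pairs exactly once. An orthogonal trade of index $(\ell,k)$ is a Latin trade $T\subseteq B_p(\ell)$ having a disjoint mate $T'$ such that $(B_p(\ell)\setminus T)\cup T'$ is orthogonal to $B_p(k)$. $|T|$ is the number of triples in $T$. *)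

(* Defs.v *)
From mathcomp Require Import all_boot.
Set Implicit Arguments. Unset Strict Implicit. Unset Printing Implicit Defensive.

(* A triple (row, column, symbol) in Z_p^3, with Z_p represented by 'I_p
   (values 0..p-1, arithmetic taken modulo p). *)
Definition triple (p : nat) := ('I_p * 'I_p * 'I_p)%type.

Section LatinDefs.
Variable p : nat.

Definition trow (t : triple p) : 'I_p := t.1.1.
Definition tcol (t : triple p) : 'I_p := t.1.2.
Definition tsym (t : triple p) : 'I_p := t.2.

Definition Bp (k : nat) : {set triple p} :=
  [set t : triple p | val (tsym t) == (k * trow t + tcol t) %% p].

Definition partial_latin (S : {set triple p}) : Prop :=
  forall t u, t \in S -> u \in S ->
    ((trow t = trow u /\ tcol t = tcol u) \/
     (trow t = trow u /\ tsym t = tsym u) \/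
     (tcol t = tcol u /\ tsym t = tsym u)) -> t = u.

Definition latin_square (L : {set triple p}) : Prop :=
  (forall i j : 'I_p, #|[set t in L | (trow t == i) && (tcol t == j)]| = 1) /\
  (forall i s : 'I_p, #|[set t in L | (trow t == i) && (tsym t == s)]| = 1) /\
  (forall j s : 'I_p, #|[set t in L | (tcol t == j) && (tsym t == s)]| = 1).

Definition cells (S : {set triple p}) : {set 'I_p * 'I_p} := [set t.1 | t in S].
Definition row_syms (S : {set triple p}) (r : 'I_p) : {set 'I_p} :=
  [set tsym t | t in [set t in S | trow t == r]].
Definition col_syms (S : {set triple p}) (c : 'I_p) : {set 'I_p} :=
  [set tsym t | t in [set t in S | tcol t == c]].

Definition disjoint_mate (T T' : {set triple p}) : Prop :=
  partial_latin T' /\ cells T = cells T' /\ T :&: T' = set0 /\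
  (forall r, row_syms T r = row_syms T' r) /\
  (forall c, col_syms T c = col_syms T' c).

Definition latin_trade (L T : {set triple p}) : Prop :=
  T \subset L /\ exists T', disjoint_mate T T'.

Definition orthogonal (L1 L2 : {set triple p}) : Prop :=
  latin_square L1 /\ latin_square L2 /\
  forall a b : 'I_p,
    #|[set c : 'I_p * 'I_p | [exists t1 in L1, exists t2 in L2,
        [&& t1.1 == c, t2.1 == c, tsym t1 == a & tsym t2 == b]]]| = 1.

Definition orthogonal_trade (l k : nat) (T : {set triple p}) : Prop :=
  T \subset Bp l /\
  exists T', disjoint_mate T T' /\ orthogonal ((Bp l :\: T) :|: T') (Bp k).

End LatinDefs.

(* Main.v *)
Require Import Defs.
From mathcomp Require Import all_boot all_algebra all_fingroup all_solvable.
From mathcomp Require Import zify ring.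
Require Import Defs.
Set Implicit Arguments. Unset Strict Implicit. Unset Printing Implicit Defensive.
Import GRing.Theory Num.Theory.

Section Comb.
Local Open Scope ring_scope.
Variable k : nat.
Local Notation kz := (k%:Z).
Local Notation r := (kz - 1).

Definition hexz (A B : int) : bool :=
  [&& 0 <= A, 0 <= B, A <= 2*r, B <= 2*r, A <= B + r, B <= A + r &
   ~~ ((A == r) && (B == r))].

Definition secv (A B : int) (v1 v5 v4 v6 v2 v3 : int) : int :=
  if ~~ hexz A B then 0 else
  if (r <= A) && (B < r) then v1 else
  if (r <= B) && (B < A) then v5 else
  if (r < A) && (A <= B) then v4 else
  if (A <= r) && (r < B) then v6 else
  if (B <= r) && (A < B) then v2 else v3.

Definition dl A B := secv A B 1 (1 - kz) (- kz) (-1) (kz - 1) kz.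
Definition lc A B := secv A B kz 1 (1 - kz) (- kz) (-1) (kz - 1).
Definition lb A B := secv A B (1 - kz) (- kz) (-1) (kz - 1) kz 1.

Ltac crush := rewrite /dl /lc /lb /secv /hexz; repeat case: ifP; lia.

Lemma inj_col A1 B1 A2 B2 : (2 <= kz) -> A1 = A2 -> B1 + lc A1 B1 = B2 + lc A2 B2 -> B1 = B2.
Proof. move=> k2 e; subst A2; crush. Qed.
Lemma inj_bk A1 B1 A2 B2 : (2 <= kz) -> B1 = B2 -> A1 + lb A1 B1 = A2 + lb A2 B2 -> A1 = A2.
Proof. move=> k2 e; subst B2; crush. Qed.
Lemma inj_row A1 B1 A2 B2 : (2 <= kz) -> A1 + dl A1 B1 = A2 + dl A2 B2 -> B1 + dl A1 B1 = B2 + dl A2 B2 -> A1 = A2 /\ B1 = B2.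
Proof. move=> k2; crush. Qed.

Lemma rng_all (P A B : int) : 2 <= kz -> 2 * kz <= P + 1 -> 0 <= A < P -> 0 <= B < P ->
  [/\ 0 <= A + dl A B < P, 0 <= B + dl A B < P, 0 <= B + lc A B < P & 0 <= A + lb A B < P].
Proof. move=> k2 kP hA hB; split; crush. Qed.

Lemma dl_nz (P A B : int) : 2 <= kz -> 2 * kz <= P + 1 -> hexz A B ->
  (0 < dl A B < P) \/ (0 < - dl A B < P).
Proof. move=> k2 kP; crush. Qed.

Lemma dl_out A B : ~~ hexz A B -> dl A B = 0.
Proof. by rewrite /dl /secv => ->. Qed.
End Comb.


Section Ring.
Local Open Scope ring_scope.
Variables (q k : nat).
Local Notation p := q.+2.
Local Notation K := (k%:R : 'I_p).
Hypothesis k2 : (2 <= k)%N.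
Hypothesis kp : (2 * k <= p + 1)%N.
Hypothesis hK : K * K - K + 1 = 0.

Lemma nat_cast (n : nat) : ((n%:Z)%:~R : 'I_p) = n%:R.
Proof. by rewrite -pmulrn. Qed.

Lemma cast_val (x : 'I_p) : ((val x)%:Z)%:~R = x.
Proof. by rewrite nat_cast natr_Zp. Qed.

Lemma valn (n : nat) : val (n%:R : 'I_p) = (n %% p)%N.
Proof. by rewrite Zp_nat. Qed.

Lemma cast_inj (u v : int) : 0 <= u < p%:Z -> 0 <= v < p%:Z -> (u%:~R : 'I_p) = v%:~R -> u = v.
Proof.
case: u => [m|m] //; case: v => [n|n] // /andP[_ hm] /andP[_ hn].
rewrite !nat_cast => /(congr1 val); rewrite !valn !modn_small //; try lia.
Qed.

Lemma KV : K * (1 - K) = 1.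
Proof. apply/eqP; rewrite -subr_eq0; apply/eqP; rewrite -oppr0 -hK; ring. Qed.


Lemma kzK : ((k%:Z)%:~R : 'I_p) = K.
Proof. exact: nat_cast. Qed.

Ltac polyK := rewrite ?intrN ?intrB ?intrD ?kzK /=; apply/eqP; rewrite -subr_eq0; apply/eqP;
  first [ (transitivity (0 * (K * K - K + 1)); [ring | by rewrite hK mulr0])
        | (transitivity (1 * (K * K - K + 1)); [ring | by rewrite hK mulr0])
        | (transitivity ((-1) * (K * K - K + 1)); [ring | by rewrite hK mulr0]) ].

Lemma dl_lc A B : ((dl k A B)%:~R : 'I_p) = (lc k A B)%:~R * (1 - K).
Proof. rewrite /dl /lc /secv; repeat case: ifP => _; polyK. Qed.

Lemma dl_lb A B : ((dl k A B)%:~R : 'I_p) = (lb k A B)%:~R * K.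
Proof. rewrite /dl /lb /secv; repeat case: ifP => _; polyK. Qed.

Definition Az (x : 'I_p * 'I_p) : int := (val x.2)%:Z.
Definition Bz (x : 'I_p * 'I_p) : int := (val (K * x.1 + x.2))%:Z.
Definition Fs (x : 'I_p * 'I_p) : 'I_p := x.1 + x.2 + (dl k (Az x) (Bz x))%:~R.
Definition mk (A B : int) : 'I_p * 'I_p := ((B - A)%:~R * (1 - K), A%:~R).

Lemma Az_rng x : 0 <= Az x < p%:Z.
Proof. by case: x => i [n hn]; rewrite /Az /=; lia. Qed.
Lemma Bz_rng x : 0 <= Bz x < p%:Z.
Proof. by rewrite /Bz; case: (K * x.1 + x.2) => n hn /=; lia. Qed.

Lemma Az_cast x : (Az x)%:~R = x.2.
Proof. exact: cast_val. Qed.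
Lemma Bz_cast x : (Bz x)%:~R = K * x.1 + x.2.
Proof. exact: cast_val. Qed.

Lemma mkK x : mk (Az x) (Bz x) = x.
Proof.
case: x => i j; rewrite /mk /= intrB Az_cast Bz_cast /=; congr (_, _).
by rewrite addrK mulrC mulrA (mulrC _ K) KV mul1r.
Qed.

Lemma cell_eq x y : Az x = Az y -> Bz x = Bz y -> x = y.
Proof. by move=> e1 e2; rewrite -(mkK x) -(mkK y) e1 e2. Qed.

Lemma kzge : (2 <= k%:Z)%R. Proof. lia. Qed.
Lemma kzP : (2 * k%:Z <= p%:Z + 1)%R. Proof. lia. Qed.

Lemma Fs_row x y : x.1 = y.1 -> Fs x = Fs y -> x = y.
Proof.
move=> e1 eF.
have [ax1 bx1 _ _] := rng_all kzge kzP (Az_rng x) (Bz_rng x).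
have [ay1 by1 _ _] := rng_all kzge kzP (Az_rng y) (Bz_rng y).
have eA : Az x + dl k (Az x) (Bz x) = Az y + dl k (Az y) (Bz y).
  apply: cast_inj => //; rewrite !intrD !Az_cast.
  by move: eF; rewrite /Fs e1 -!addrA => /addrI.
have eB : Bz x + dl k (Az x) (Bz x) = Bz y + dl k (Az y) (Bz y).
  apply: cast_inj => //; rewrite !intrD !Bz_cast.
  by move: eF; rewrite /Fs e1 -!addrA => /addrI ->.
have [] := inj_row kzge eA eB.
exact: cell_eq.
Qed.

Lemma Fs_decomp_col x : Fs x = (Bz x + lc k (Az x) (Bz x) - Az x)%:~R * (1 - K) + x.2.
Proof.
rewrite /Fs dl_lc !intrB !intrD Bz_cast Az_cast.
rewrite -{1}(mkK x) /mk /= intrB Az_cast Bz_cast; ring.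
Qed.

Lemma Fs_col x y : x.2 = y.2 -> Fs x = Fs y -> x = y.
Proof.
move=> e2 eF.
have eA : Az x = Az y by rewrite /Az e2.
have [_ _ cx _] := rng_all kzge kzP (Az_rng x) (Bz_rng x).
have [_ _ cy _] := rng_all kzge kzP (Az_rng y) (Bz_rng y).
have eB : Bz x + lc k (Az x) (Bz x) = Bz y + lc k (Az y) (Bz y).
  apply: cast_inj => //.
  move: eF; rewrite !Fs_decomp_col e2 eA => /addIr /(congr1 (fun z => z * K)).
  by rewrite -!mulrA (mulrC (1 - K)) KV !mulr1 !(intrB _ _ (Az y)) => /addIr.
apply: cell_eq => //; exact: inj_col kzge eA eB.
Qed.

Lemma Fs_decomp_bk x : Fs x = (Bz x)%:~R * (1 - K) + (Az x + lb k (Az x) (Bz x))%:~R * K.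
Proof.
rewrite /Fs dl_lb !intrD Bz_cast Az_cast.
rewrite -{1}(mkK x) /mk /= intrB Az_cast Bz_cast; ring.
Qed.

Lemma Fs_bk x y : K * x.1 + x.2 = K * y.1 + y.2 -> Fs x = Fs y -> x = y.
Proof.
move=> e2 eF.
have eB : Bz x = Bz y by rewrite /Bz e2.
have [_ _ _ cx] := rng_all kzge kzP (Az_rng x) (Bz_rng x).
have [_ _ _ cy] := rng_all kzge kzP (Az_rng y) (Bz_rng y).
have eA : Az x + lb k (Az x) (Bz x) = Az y + lb k (Az y) (Bz y).
  apply: cast_inj => //.
  move: eF; rewrite !Fs_decomp_bk eB => /addrI /(congr1 (fun z => z * (1 - K))).
  by rewrite -!mulrA KV !mulr1.
apply: cell_eq => //; exact: inj_bk kzge eB eA.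
Qed.

Lemma Fs_ne x : hexz k (Az x) (Bz x) -> Fs x != x.1 + x.2.
Proof.
move=> hx; apply/eqP => eF.
have e : ((dl k (Az x) (Bz x))%:~R : 'I_p) = 0.
  by move: eF; rewrite /Fs -{2}[x.1 + x.2]addr0 => /addrI.
have [/andP[h1 h2]|/andP[h1 h2]] := dl_nz kzge kzP hx.
  have : dl k (Az x) (Bz x) = 0.
    apply: cast_inj; try lia; by rewrite e.
  lia.
have : - dl k (Az x) (Bz x) = 0.
  apply: cast_inj; try lia; by rewrite intrN e oppr0.
lia.
Qed.

Lemma Fs_out x : ~~ hexz k (Az x) (Bz x) -> Fs x = x.1 + x.2.
Proof. by move=> h; rewrite /Fs dl_out // addr0. Qed.

End Ring.


Lemma inj_surj (T : finType) (f : T -> T) : injective f -> forall y, exists x, f x = y.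
Proof. by move=> inj y; exists (invF inj y); rewrite f_invF. Qed.

Section Gen.
Variable q : nat.
Local Notation p := q.+2.

Definition graph (G : 'I_p -> 'I_p -> 'I_p) : {set triple p} :=
  [set t : triple p | tsym t == G (trow t) (tcol t)].

Lemma graph_latin (G : 'I_p -> 'I_p -> 'I_p) :
  (forall i, injective (G i)) -> (forall j, injective (G^~ j)) -> latin_square (graph G).
Proof.
move=> Hr Hc; split; [|split].
- move=> i j; apply: (@eq_card1 _ ((i, j), G i j)) => [[[a b] c]].
  rewrite !inE /trow /tcol /tsym /= !xpair_eqE.
  by apply/idP/idP => [/andP[/eqP -> /andP[/eqP -> /eqP ->]]|/andP[/andP[/eqP -> /eqP ->] /eqP ->]];
     rewrite !eqxx.
- move=> i s; have [j hj] := inj_surj (Hr i) s.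
  apply: (@eq_card1 _ ((i, j), s)) => [[[a b] c]].
  rewrite !inE /trow /tcol /tsym /= !xpair_eqE.
  apply/idP/idP => [/andP[/eqP e1 /andP[/eqP ea /eqP ec]]|/andP[/andP[/eqP -> /eqP ->] /eqP ->]].
    subst a c; have ejb := Hr i j b (etrans hj (esym ec)); subst b; by rewrite hj !eqxx.
  by rewrite hj !eqxx.
- move=> j s; have [i hi] := inj_surj (Hc j) s.
  apply: (@eq_card1 _ ((i, j), s)) => [[[a b] c]].
  rewrite !inE /trow /tcol /tsym /= !xpair_eqE.
  apply/idP/idP => [/andP[/eqP e1 /andP[/eqP ea /eqP ec]]|/andP[/andP[/eqP -> /eqP ->] /eqP ->]].
    subst b c; have eia := Hc j i a (etrans hi (esym ec)); subst a; by rewrite hi !eqxx.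
  by rewrite hi !eqxx.
Qed.

Lemma graph_orth (G H : 'I_p -> 'I_p -> 'I_p) :
  (forall i, injective (G i)) -> (forall j, injective (G^~ j)) ->
  (forall i, injective (H i)) -> (forall j, injective (H^~ j)) ->
  (forall x y : 'I_p * 'I_p, H x.1 x.2 = H y.1 y.2 -> G x.1 x.2 = G y.1 y.2 -> x = y) ->
  orthogonal (graph G) (graph H).
Proof.
move=> G1 G2 H1 H2 GH; split; [exact: graph_latin|split; [exact: graph_latin|]].
move=> a b.
pose phi (c : 'I_p * 'I_p) := (G c.1 c.2, H c.1 c.2).
have phi_inj : injective phi.
  by move=> x y [e1 e2]; apply: GH.
have [c0 hc0] := inj_surj phi_inj (a, b).
apply: (@eq_card1 _ c0) => c; rewrite !inE.
apply/existsP/idP.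
- case=> t1 /andP[t1L /existsP[t2 /andP[t2L /and4P[/eqP e1 /eqP e2 /eqP e3 /eqP e4]]]].
  case: t1 t1L e1 e3 => c1 a1 t1L e1 e3; case: t2 t2L e2 e4 => c2 b1 t2L e2 e4.
  rewrite /tsym /= in e1 e2 e3 e4; subst c1 c2 a1 b1.
  move: t1L t2L; rewrite !inE /tsym /trow /tcol /= => /eqP ea /eqP eb.
  by apply/eqP; apply: phi_inj; rewrite hc0 /phi -ea -eb.
- move=> /eqP ->; exists (c0, a); rewrite !inE /tsym /trow /tcol /=.
  have [ea eb] : G c0.1 c0.2 = a /\ H c0.1 c0.2 = b by move: hc0; rewrite /phi => [[-> ->]].
  rewrite ea eqxx /=; apply/existsP; exists (c0, b).
  by rewrite !inE /tsym /trow /tcol /= eb !eqxx.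
Qed.

Lemma mate_line (f g : 'I_p -> 'I_p) (P : pred 'I_p) :
  injective f -> injective g -> (forall x, ~~ P x -> f x = g x) ->
  forall s, (exists2 x, P x & s = f x) -> (exists2 x, P x & s = g x).
Proof.
move=> fi gi fg s [x0 Px0 ->].
have [y hy] := inj_surj gi (f x0).
case Py: (P y); first by exists y.
by move: hy; rewrite -fg ?Py // => /fi e; rewrite -e Py in Px0.
Qed.

End Gen.


Section Trade.
Local Open Scope ring_scope.
Variables (q k : nat).
Local Notation p := q.+2.
Local Notation K := (k%:R : 'I_p).
Hypothesis k2 : (2 <= k)%N.
Hypothesis kp : (2 * k <= p + 1)%N.
Hypothesis hK : K * K - K + 1 = 0.

Lemma Bp_graph (l : nat) : Bp p l = graph (fun i j => l%:R * i + j).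
Proof.
apply/setP => t; rewrite !inE.
have -> : (l%:R * trow t + tcol t : 'I_p) = (l * trow t + tcol t)%:R.
  by rewrite natrD natrM !natr_Zp.
by rewrite -val_eqE /= valn.
Qed.

Definition Gn (i j : 'I_p) := Fs k (i, j).
Definition inH (c : 'I_p * 'I_p) := hexz k (Az c) (Bz k c).
Definition Tt : {set triple p} := [set t in Bp p 1 | inH t.1].
Definition Tm : {set triple p} := [set t : triple p | inH t.1 && (tsym t == Fs k t.1)].

Lemma Gn_row i : injective (Gn i).
Proof. by move=> a b e; have [] := Fs_row k2 kp hK (x := (i, a)) (y := (i, b)) erefl e. Qed.
Lemma Gn_col j : injective (Gn^~ j).
Proof. by move=> a b e; have [] := Fs_col k2 kp hK (x := (a, j)) (y := (b, j)) erefl e. Qed.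

Lemma L_eq : (Bp p 1 :\: Tt) :|: Tm = graph Gn.
Proof.
rewrite /Tt Bp_graph; apply/setP => [[[i j] s]]; rewrite !inE /trow /tcol /tsym /= /Gn mul1r.
case h: (inH (i, j)) => /=; rewrite ?andbF ?andbT ?orbF //; first by rewrite andNb.
by rewrite Fs_out //; rewrite /inH in h; rewrite h.
Qed.

Lemma Tt_sub : Tt \subset Bp p 1.
Proof. by apply/subsetP => t; rewrite inE => /andP[]. Qed.

Lemma mate : disjoint_mate Tt Tm.
Proof.
split; [|split; [|split; [|split]]].
- move=> [[i1 j1] s1] [[i2 j2] s2]; rewrite !inE /trow /tcol /tsym /= => /andP[_ /eqP e1] /andP[_ /eqP e2].
  rewrite /trow /tcol /tsym /=.
  case=> [[ei ej]|[[ei es]|[ej es]]].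
  + by subst i2 j2; rewrite e1 e2.
  + rewrite -ei -es in e2 *; have ej := @Gn_row i1 j1 j2 (etrans (esym e1) e2).
    by rewrite ej.
  + rewrite -ej -es in e2 *; have ei := @Gn_col j1 i1 i2 (etrans (esym e1) e2).
    by rewrite ei.
- rewrite /Tt Bp_graph; apply/setP => c; apply/imsetP/imsetP => [[t]|[t]].
  + rewrite inE => /andP[_ h] ->; exists (t.1, Fs k t.1) => //; by rewrite inE h eqxx.
  + rewrite inE => /andP[h _] ->; exists (t.1, t.1.1 + t.1.2) => //.
    by rewrite !inE h /tsym /trow /tcol /= mul1r eqxx.
- rewrite /Tt Bp_graph; apply/setP => [[[i j] s]]; rewrite !inE /trow /tcol /tsym /= mul1r.
  apply/negP => /andP[/andP[/eqP e1 h] /andP[_ /eqP e2]].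
  by have := Fs_ne k2 kp h; rewrite -e2 e1 eqxx.
- move=> r0; apply/setP => s.
  have eT : (s \in row_syms Tt r0) = [exists j, inH (r0, j) && (s == r0 + j)].
    rewrite /Tt Bp_graph; apply/imsetP/existsP => [[t]|[j /andP[h /eqP ->]]].
      rewrite !inE => /andP[/andP[/eqP es h] /eqP er] ->.
      exists t.1.2; rewrite /trow in er; rewrite -er; case: t es h er => [[i j] s'] /= es h er.
      by rewrite /tsym /= es mul1r h eqxx.
    exists ((r0, j), r0 + j) => //; by rewrite !inE /tsym /trow /tcol /= mul1r h !eqxx.
  have eT' : (s \in row_syms Tm r0) = [exists j, inH (r0, j) && (s == Gn r0 j)].
    apply/imsetP/existsP => [[t]|[j /andP[h /eqP ->]]].
      rewrite !inE => /andP[/andP[h /eqP es] /eqP er] ->.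
      exists t.1.2; rewrite /trow in er; rewrite -er; case: t es h er => [[i j] s'] /= es h er.
      by rewrite /tsym /Gn /= es h eqxx.
    exists ((r0, j), Gn r0 j) => //; by rewrite !inE /tsym /trow /= h !eqxx.
  rewrite eT eT'.
  have hfg : forall j, ~~ (fun j => inH (r0, j)) j -> r0 + j = Gn r0 j.
    by move=> j /= h; rewrite /Gn Fs_out.
  apply/existsP/existsP => [[j /andP[h /eqP e]]|[j /andP[h /eqP e]]].
    have [j' h' e'] := mate_line (addrI r0) (@Gn_row r0) hfg (ex_intro2 _ _ j h e).
    by exists j'; rewrite h' e' eqxx.
  have hgf : forall j, ~~ (fun j => inH (r0, j)) j -> Gn r0 j = r0 + j.
    by move=> j0 /hfg.
  have [j' h' e'] := mate_line (@Gn_row r0) (addrI r0) hgf (ex_intro2 _ _ j h e).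
  by exists j'; rewrite h' e' eqxx.
- move=> c0; apply/setP => s.
  have eT : (s \in col_syms Tt c0) = [exists i, inH (i, c0) && (s == i + c0)].
    rewrite /Tt Bp_graph; apply/imsetP/existsP => [[t]|[i /andP[h /eqP ->]]].
      rewrite !inE => /andP[/andP[/eqP es h] /eqP er] ->.
      exists t.1.1; rewrite /tcol in er; rewrite -er; case: t es h er => [[i j] s'] /= es h er.
      by rewrite /tsym /= es mul1r h eqxx.
    exists ((i, c0), i + c0) => //; by rewrite !inE /tsym /trow /tcol /= mul1r h !eqxx.
  have eT' : (s \in col_syms Tm c0) = [exists i, inH (i, c0) && (s == Gn i c0)].
    apply/imsetP/existsP => [[t]|[i /andP[h /eqP ->]]].
      rewrite !inE => /andP[/andP[h /eqP es] /eqP er] ->.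
      exists t.1.1; rewrite /tcol in er; rewrite -er; case: t es h er => [[i j] s'] /= es h er.
      by rewrite /tsym /Gn /= es h eqxx.
    exists ((i, c0), Gn i c0) => //; by rewrite !inE /tsym /tcol /= h !eqxx.
  rewrite eT eT'.
  have hfg : forall i, ~~ (fun i => inH (i, c0)) i -> i + c0 = Gn i c0.
    by move=> i /= h; rewrite /Gn Fs_out.
  apply/existsP/existsP => [[i /andP[h /eqP e]]|[i /andP[h /eqP e]]].
    have [i' h' e'] := mate_line (addIr c0) (@Gn_col c0) hfg (ex_intro2 _ _ i h e).
    by exists i'; rewrite h' e' eqxx.
  have hgf : forall i, ~~ (fun i => inH (i, c0)) i -> Gn i c0 = i + c0.
    by move=> i0 /hfg.
  have [i' h' e'] := mate_line (@Gn_col c0) (addIr c0) hgf (ex_intro2 _ _ i h e).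
  by exists i'; rewrite h' e' eqxx.
Qed.

Lemma Kinj : injective (fun i : 'I_p => K * i).
Proof.
move=> a b /(congr1 (fun z => (1 - K) * z)) /=.
by rewrite !mulrA (mulrC (1 - K)) (KV hK) !mul1r.
Qed.

Lemma orth_trade : orthogonal_trade 1 k Tt.
Proof.
split; first exact: Tt_sub.
exists Tm; split; first exact: mate.
rewrite L_eq Bp_graph; apply: graph_orth.
- exact: Gn_row.
- exact: Gn_col.
- by move=> i; exact: addrI.
- by move=> j a b /addIr /Kinj.
- move=> [i1 j1] [i2 j2] /= e1 e2.
  exact: (Fs_bk k2 kp hK (x := (i1, j1)) (y := (i2, j2))).
Qed.

End Trade.


Section Cnt.
Variable r : nat.
Definition hexn (a b : nat) : bool :=
  [&& a <= 2*r, b <= 2*r, a <= b + r, b <= a + r & ~~ ((a == r) && (b == r))].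
Definition gi n a := if a <= 2*r then (minn (minn (a + r) (2*r)).+1 n - (a - r)) - ((a == r) && (r < n)) else 0.

Lemma inner n a : \sum_(b < n) (hexn a b : nat) = gi n a.
Proof.
elim: n => [|n IH]; first by rewrite big_ord0 /gi; case: ifP => //; lia.
rewrite big_ord_recr /= IH /gi /hexn.
do ?(case: ifP => ?); lia.
Qed.

Definition gs a := if a <= r then a + r + 1 - (a == r) else if a <= 2*r then 3*r + 1 - a else 0.

Lemma gi_gs m a : 2 * r < m -> gi m a = gs a.
Proof. move=> hm; rewrite /gi /gs; do ?(case: ifP => ?); lia. Qed.

Lemma L1 n : n <= r.+1 -> 2 * \sum_(a < n) gs a + 2 * (n == r.+1) = n * n + n * (2 * r + 1).
Proof.
elim: n => [|n IH] hn; first by rewrite big_ord0.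
rewrite big_ord_recr /= mulnDr.
have := IH (ltnW hn); move: (\sum_(a < n) gs a) => S; rewrite /gs.
case: (n =P r) => ?; case: (n =P r.+1) => ?; case: (n.+1 =P r.+1) => ?; do ?(case: ifP => ?); lia.
Qed.

Lemma L2 d : d <= r -> 2 * \sum_(a < r.+1 + d) gs a + d * d + 2 = (r+1)*(3*r+2) + 4*r*d + d.
Proof.
elim: d => [|d IH] hd.
  rewrite addn0; have := L1 (leqnn r.+1); rewrite eqxx /=; lia.
have IH' := IH (ltnW hd).
rewrite [r.+1 + d.+1]addnS.
have [m em] : {m | r.+1 + d = m} by exists (r.+1 + d).
rewrite em in IH' *.
rewrite big_ord_recr /= mulnDr.
move: IH'; move: (\sum_(a < m) gs a) => S; rewrite /gs.
case: (m =P r) => ?; do ?(case: ifP => ?); lia.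
Qed.

Lemma L3 n : 2 * r < n -> \sum_(a < n) gs a = \sum_(a < r.+1 + r) gs a.
Proof.
elim: n => [|n IH] hn; first by [].
case: (ltngtP (2 * r) n) => h.
- by rewrite big_ord_recr /= IH // /gs; do ?(case: ifP => ?); try lia; rewrite addn0.
- lia.
- by rewrite -h; have -> : r.+1 + r = (2 * r).+1 by lia.
Qed.

Lemma total m : 0 < r -> 2 * r < m -> \sum_(a < m) \sum_(b < m) (hexn a b : nat) = 3 * r * (r + 1).
Proof.
move=> r0 hm.
rewrite (eq_bigr (fun a => gs (nat_of_ord a))); last by move=> a _; rewrite inner gi_gs.
rewrite L3 //; have := L2 (leqnn r); lia.
Qed.
End Cnt.


Section Count.
Local Open Scope ring_scope.
Variables (q k : nat).
Local Notation p := q.+2.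
Local Notation K := (k%:R : 'I_p).
Hypothesis k2 : (2 <= k)%N.
Hypothesis kp : (2 * k <= p + 1)%N.
Hypothesis hK : K * K - K + 1 = 0.

Lemma hexz_n (a b : nat) : hexz k a%:Z b%:Z = hexn k.-1 a b.
Proof. rewrite /hexz /hexn; apply/idP/idP; lia. Qed.

Lemma card_Tt : #|Tt q k| = (3 * k * (k - 1))%N.
Proof.
have -> : Tt q k = (fun c => (c, c.1 + c.2)) @: [set c | inH k c].
  apply/setP => [[[i j] s]]; rewrite /Tt Bp_graph !inE /trow /tcol /tsym /= mul1r.
  apply/andP/imsetP => [[/eqP -> h]|[c]]; first by exists (i, j); rewrite // inE.
  by case: c => i' j'; rewrite inE => h [-> -> ->]; rewrite eqxx.
rewrite card_imset; last by move=> c d [].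
pose phi (c : 'I_p * 'I_p) := (c.2, K * c.1 + c.2).
have phi_inj : injective phi.
  move=> [i1 j1] [i2 j2] e; have e2 : j1 = j2 := congr1 fst e.
  have e1 : K * i1 + j1 = K * i2 + j2 := congr1 snd e.
  rewrite e2 in e1 *; move/addIr: e1 => e1; by rewrite (Kinj hK e1).
have -> : [set c | inH k c] = phi @^-1: [set y : 'I_p * 'I_p | hexn k.-1 y.1 y.2].
  by apply/setP => c; rewrite !inE /inH /Az /Bz hexz_n.
rewrite card_preimset //.
rewrite -sum1_card big_mkcond /=.
rewrite (eq_bigr (fun y : 'I_p * 'I_p => nat_of_bool (hexn k.-1 y.1 y.2))); last first.
  by move=> y _; rewrite inE; case: (hexn _ _ _).
rewrite -(pair_bigA _ (fun (a b : 'I_p) => nat_of_bool (hexn k.-1 a b))) /=.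
rewrite (eq_bigr (fun a : 'I_p => \sum_(b < p) nat_of_bool (hexn k.-1 a b)))%N //.
rewrite total; [lia | lia | lia].
Qed.
End Count.


Section Exist.
Variable q : nat.
Local Notation p := q.+2.

Lemma modeq (n : nat) : ((n ^ 2 - n + 1) %% p == 0)%N = ((n%:R : 'I_p) * n%:R - n%:R + 1 == 0)%R.
Proof.
rewrite (_ : n ^ 2 = n * n)%N; last by rewrite expnS expn1.
have hn : (n <= n * n)%N by nia.
by rewrite -natrM -(natrB _ hn) natr1 -val_eqE /= valn addn1.
Qed.

Lemma natp : ((p%:R)%R : 'I_p) = 0%R.
Proof. by apply: val_inj; rewrite valn modnn. Qed.

Lemma exists_k : prime p -> p %% 6 = 1 ->
  exists k : nat, (2 <= k <= (p + 1) %/ 2 /\ (k ^ 2 - k + 1) %% p = 0)%N.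
Proof.
move=> pr p6.
have hcard : (3 %| #|units_Zp p|)%N.
  rewrite card_units_Zp // totient_prime //.
  apply/dvdnP; exists (p %/ 6 * 2); lia.
have [x _ ox] := Cauchy (isT : prime 3) hcard.
set w : 'I_p := val x.
have w3 : (w ^+ 3 = 1)%R by rewrite /w -FinRing.val_unitX -ox expg_order.
have w1 : w != 1%R.
  apply/eqP => e; have : x = 1%g by apply: val_inj; rewrite /= -/w e.
  by move=> ex; move: ox; rewrite ex order1.
set wn := nat_of_ord w.
have wE : ((wn%:R)%R : 'I_p) = w by rewrite natr_Zp.
have wn1 : wn != 1%N.
  by apply: contra w1 => /eqP e; apply/eqP; apply: val_inj; rewrite /= -/wn e.
have wn0 : wn != 0%N.
  apply/eqP => e; move: w3; rewrite -wE e mulr0n expr0n /= => /eqP; rewrite eq_sym oner_eq0.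
  done.
have wlt : (wn < p)%N by exact: ltn_ord.
have dv : (p %| (wn - 1) * (wn ^ 2 + wn + 1))%N.
  have e : ((wn - 1) * (wn ^ 2 + wn + 1) = wn ^ 3 - 1)%N.
    rewrite !expnS expn0; have : (1 <= wn)%N by lia. move=> h. nia.
  rewrite e -eqn_mod_dvd; last by rewrite expn_gt0; lia.
  apply/eqP; rewrite -!valn; congr val; by rewrite natrX wE w3.
rewrite Euclid_dvdM // gtnNdvd /= in dv; [|lia|lia].
set kk := wn.+1.
have kkp : (kk < p)%N.
  rewrite ltn_neqAle wlt andbT; apply/eqP => e.
  have : (p %| wn ^ 2 + wn + 1)%N by [].
  have -> : (wn ^ 2 + wn + 1 = wn * p + 1)%N by rewrite -/kk in e; rewrite expnS expn1 -e /kk; nia.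
  by rewrite (@dvdn_addr (wn * p)) ?dvdn_mull // dvdn1; lia.
have hkk : ((kk ^ 2 - kk + 1) %% p = 0)%N.
  have -> : (kk ^ 2 - kk + 1 = wn ^ 2 + wn + 1)%N by rewrite /kk !expnS expn0; nia.
  by apply/eqP; rewrite -/(dvdn _ _).
case: (leqP kk ((p + 1) %/ 2)) => hk.
  by exists kk; split => //; lia.
exists (p + 1 - kk)%N; split; first lia.
apply/eqP; rewrite modeq.
have -> : (((p + 1 - kk)%:R)%R : 'I_p) = (1 - kk%:R)%R.
  by rewrite natrB; [rewrite natrD natp add0r | lia].
move: hkk => /eqP; rewrite modeq => /eqP h.
apply/eqP; rewrite -h; ring.
Qed.
End Exist.

Theorem mainTheorem11 (p : nat) (hp : prime p) (hp6 : p %% 6 = 1) :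
  (exists k : nat, 2 <= k <= p - 1 /\
     exists T : {set triple p}, orthogonal_trade 1 k T /\ ~~ (p %| #|T|)) /\
  (exists k : nat, 2 <= k <= (p + 1) %/ 2 /\ (k ^ 2 - k + 1) %% p = 0) /\
  (forall k : nat, 2 <= k <= (p + 1) %/ 2 -> (k ^ 2 - k + 1) %% p = 0 ->
     exists T : {set triple p}, orthogonal_trade 1 k T /\ #|T| = 3 * k * (k - 1)).
Proof.
case: p hp hp6 => [|[|q]] hp hp6 //.
have P3 : forall k, 2 <= k <= (q.+2 + 1) %/ 2 -> (k ^ 2 - k + 1) %% q.+2 = 0 ->
    exists T : {set triple q.+2}, orthogonal_trade 1 k T /\ #|T| = 3 * k * (k - 1).
  move=> k /andP[k2 kh] hk.
  have kp : 2 * k <= q.+2 + 1 by lia.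
  have hK : ((k%:R : 'I_q.+2) * k%:R - k%:R + 1 = 0)%R.
    by apply/eqP; rewrite -modeq hk.
  exists (Tt q k); split; [exact: orth_trade | exact: card_Tt].
have P2 := exists_k hp hp6.
split; last by split.
have [k [/andP[k2 kh] hk]] := P2.
have [T [oT cT]] := P3 k (introT andP (conj k2 kh)) hk.
exists k; split; first by apply/andP; split => //; lia.
exists T; split => //; rewrite cT !Euclid_dvdM // !gtnNdvd //; lia.
Qed.
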